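(* Let $d,n\ge 2$, $0<\varepsilon<1/4$, and let $f$ be a stable update function. There exists $K>0$ such that for every configuration $\mathcal U^{(0)}$ of $n$ opinions in $\mathbb S^{d-1}$ that is $\varepsilon$-active, there exists a sequence of at most $K$ interventions after which the resulting configuration is $\varepsilon$-inactive.
   Context: Opinions are unit vectors in $\mathbb R^d$; a configuration is an $n$-tuple $(\vec u_1,\dots,\vec u_n)$ and $A_{ij}=\langle\vec u_i,\vec u_j\rangle$. An intervention $(i,j)$, $i\ne j$, replaces $\vec u_i$ by $\vec w/\|\vec w\|$ with $\vec w=\vec u_i+f(A_{ij})\vec u_j$, leaving others unchanged. $f:[-1,1]\to\mathbb R$ is stable if continuous and $\operatorname{sign}f(A)=\operatorname{sign}A$ for all $A$. For $0\le\varepsilon<1$, a configuration is $\varepsilon$-active if there exist $i,j$ with $\varepsilon<|A_{ij}|<1-\varepsilon$, and $\varepsilon$-inactive otherwise. *)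

(* Defs.v *)
From HB Require Import structures.
From mathcomp Require Import all_boot all_order all_algebra.
From mathcomp Require Import all_classical all_reals all_analysis.
Set Implicit Arguments. Unset Strict Implicit. Unset Printing Implicit Defensive.
Import Order.TTheory GRing.Theory Num.Theory.
Import numFieldNormedType.Exports.
Local Open Scope classical_set_scope.
Local Open Scope ring_scope.

Definition config (R : realType) (n d : nat) := 'I_n -> 'rV[R]_d.

Definition dotp (R : realType) (d : nat) (u v : 'rV[R]_d) : R :=
  \sum_(k < d) u 0 k * v 0 k.

Definition vnorm (R : realType) (d : nat) (u : 'rV[R]_d) : R :=
  Num.sqrt (dotp u u).

Definition is_unit_vec (R : realType) (d : nat) (u : 'rV[R]_d) : Prop :=
  vnorm u = 1.

Definition unit_config (R : realType) (n d : nat) (U : config R n d) : Prop :=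
  forall i, is_unit_vec (U i).

Definition gram (R : realType) (n d : nat) (U : config R n d) (i j : 'I_n) : R :=
  dotp (U i) (U j).

Definition stable (R : realType) (f : R -> R) : Prop :=
  {within `[-1, 1], continuous f} /\
  (forall A : R, -1 <= A <= 1 -> Num.sg (f A) = Num.sg A).

Definition intervene (R : realType) (n d : nat) (f : R -> R)
    (U : config R n d) (ij : 'I_n * 'I_n) : config R n d :=
  let w := U ij.1 + f (gram U ij.1 ij.2) *: U ij.2 in
  fun k => if k == ij.1 then (vnorm w)^-1 *: w else U k.

(* Apply a sequence of interventions, first element first. *)
Definition run (R : realType) (n d : nat) (f : R -> R)
    (U : config R n d) (s : seq ('I_n * 'I_n)) : config R n d :=
  foldl (intervene f) U s.

Definition valid_interventions (n : nat) (s : seq ('I_n * 'I_n)) : bool :=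
  all (fun ij => ij.1 != ij.2) s.

Definition eps_active (R : realType) (n d : nat) (eps : R) (U : config R n d) : Prop :=
  exists i j : 'I_n, eps < `|gram U i j| < 1 - eps.

Definition eps_inactive (R : realType) (n d : nat) (eps : R) (U : config R n d) : Prop :=
  ~ eps_active eps U.

(* Main.v *)
Require Import Defs.
From HB Require Import structures.
From mathcomp Require Import all_boot all_order all_algebra.
From mathcomp Require Import all_classical all_reals all_analysis.
From mathcomp Require Import ring lra.
Import Order.TTheory GRing.Theory Num.Theory.
Local Open Scope ring_scope.

Section Helpers.
Import numFieldNormedType.Exports.
Set Implicit Arguments. Unset Strict Implicit. Unset Printing Implicit Defensive.
Local Open Scope classical_set_scope.
Local Open Scope ring_scope.

Lemma f_lower (R : realType) (f : R -> R) (t : R) :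
  stable f -> 0 < t -> t <= 1 ->
  exists2 c : R, 0 < c & forall A, t <= `|A| -> `|A| <= 1 -> c <= `|f A| /\ 0 <= f A * A.
Proof.
move=> [cf sg] t0 t1.
have sub1 : forall a b : R, -1 <= a -> b <= 1 ->
   [set` `[a, b]%R] `<=` [set` `[-1, 1]%R].
  move=> a b ha hb x /=; rewrite !in_itv /= => /andP[h1 h2].
  by apply/andP; split; lra.
have e1 : -1 <= t by lra.
have e2 : (1:R) <= 1 by lra.
have e3 : (-1:R) <= -1 by lra.
have e4 : - t <= 1 by lra.
have c1 : {within `[t, 1], continuous f}.
  exact: (continuous_subspaceW (sub1 t 1 e1 e2) cf).
have c2 : {within `[-1, -t], continuous f}.
  exact: (continuous_subspaceW (sub1 (-1) (-t) e3 e4) cf).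
have [x1 hx1 min1] := EVT_min t1 c1.
have mt : -1 <= -t by lra.
have [x2 hx2 max2] := EVT_max mt c2.
move: hx1 hx2; rewrite !in_itv /= => /andP[a1 b1] /andP[a2 b2].
have f1 : 0 < f x1.
  have : -1 <= x1 <= 1 by apply/andP; split; lra.
  move=> /sg.
  rewrite (gtr0_sg (lt_le_trans t0 a1)).
  by move=> /eqP; rewrite sgr_cp0.
have f2 : f x2 < 0.
  have : -1 <= x2 <= 1 by apply/andP; split; lra.
  move=> /sg.
  have x20 : x2 < 0 by lra.
  rewrite (ltr0_sg x20).
  by move=> /eqP; rewrite sgr_cp0.
exists (Num.min (f x1) (- f x2)).
  by rewrite lt_min; apply/andP; split; lra.
move=> A hA hA1.
clear c1 c2 sub1 cf sg.
case: (lerP 0 A) => hA0.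
  have h : A \in `[t, 1] by rewrite in_itv /=; apply/andP; split; rewrite ger0_norm in hA hA1; lra.
  have := min1 _ h => h'.
  rewrite ger0_norm; last lra.
  split; last by apply: mulr_ge0; lra.
  by rewrite ge_min; apply/orP; left; lra.
have h : A \in `[-1, -t] by rewrite in_itv /=; apply/andP; split; rewrite ltr0_norm in hA hA1; lra.
have := max2 _ h => h'.
rewrite ltr0_norm; last lra.
split; last by apply: mulr_le0; lra.
by rewrite ge_min; apply/orP; right; lra.
Qed.

Section Dot.
Variables (R : realType) (d : nat).
Implicit Types (u v w : 'rV[R]_d) (a : R).

Lemma dotpC u v : dotp u v = dotp v u.
Proof. by rewrite /dotp; apply: eq_bigr => k _; rewrite mulrC. Qed.

Lemma dotpDl u v w : dotp (u + v) w = dotp u w + dotp v w.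
Proof. by rewrite /dotp -big_split; apply: eq_bigr => k _; rewrite mxE mulrDl. Qed.

Lemma dotpZl a u w : dotp (a *: u) w = a * dotp u w.
Proof. by rewrite /dotp mulr_sumr; apply: eq_bigr => k _; rewrite mxE mulrA. Qed.

Lemma dotpNl u w : dotp (- u) w = - dotp u w.
Proof. by rewrite /dotp -sumrN; apply: eq_bigr => k _; rewrite mxE mulNr. Qed.

Lemma dotpDr u v w : dotp w (u + v) = dotp w u + dotp w v.
Proof. by rewrite dotpC dotpDl !(dotpC w). Qed.

Lemma dotpZr a u w : dotp w (a *: u) = a * dotp w u.
Proof. by rewrite dotpC dotpZl dotpC. Qed.

Lemma dotpNr u w : dotp w (- u) = - dotp w u.
Proof. by rewrite dotpC dotpNl dotpC. Qed.

Lemma dotp_ge0 u : 0 <= dotp u u.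
Proof. by rewrite /dotp; apply: sumr_ge0 => k _; rewrite -expr2 sqr_ge0. Qed.

Lemma unit_dotE u : is_unit_vec u <-> dotp u u = 1.
Proof.
rewrite /is_unit_vec /vnorm; split => h; last by rewrite h sqrtr1.
by rewrite -(sqr_sqrtr (dotp_ge0 u)) h expr1n.
Qed.

Lemma dot_bound u v : dotp u u = 1 -> dotp v v = 1 -> -1 <= dotp u v <= 1.
Proof.
move=> hu hv.
have h1 := dotp_ge0 (u - v).
have h2 := dotp_ge0 (u + v).
rewrite !(dotpDl, dotpDr, dotpNl, dotpNr) hu hv (dotpC v u) in h1 h2.
apply/andP; split; lra.
Qed.

Lemma small_dot u e eta : 0 < eta -> dotp u u = 1 -> dotp e e <= eta ^+ 2 ->
  `|dotp e u| <= eta.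
Proof.
move=> he hu hee.
have h1 := dotp_ge0 (e - eta *: u).
have h2 := dotp_ge0 (e + eta *: u).
rewrite !(dotpDl, dotpDr, dotpNl, dotpNr, dotpZl, dotpZr) hu (dotpC u e) in h1 h2.
have : eta * dotp e u <= eta * eta by nra.
have : - (eta * dotp e u) <= eta * eta by nra.
move=> k1 k2.
rewrite ler_norml; apply/andP; split; nra.
Qed.

End Dot.

Definition step (R : realType) (d : nat) (f : R -> R) (v u : 'rV[R]_d) : 'rV[R]_d :=
  let w := u + f (dotp u v) *: v in (vnorm w)^-1 *: w.

Arguments step {R d}.

Lemma step_lemma (R : realType) (d : nat) (f : R -> R) (c : R) (u v : 'rV[R]_d) :
  dotp u u = 1 -> dotp v v = 1 -> c ^+ 2 <= f (dotp u v) ^+ 2 ->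
  0 <= f (dotp u v) * dotp u v ->
  dotp (step f v u) (step f v u) = 1 /\
  (1 - dotp (step f v u) v ^+ 2) * (1 + c ^+ 2) <= 1 - dotp u v ^+ 2.
Proof.
move=> hu hv hc hp.
rewrite /step.
set A := dotp u v; set al := f A.
set w := u + al *: v.
have hp' : 0 <= al * A by exact: hp.
have hc' : c ^+ 2 <= al ^+ 2 by exact: hc.
clear hp hc.
have hW : dotp w w = 1 + 2 * al * A + al ^+ 2.
  rewrite /w !(dotpDl, dotpDr, dotpZl, dotpZr) hu hv (dotpC v u) -/A; ring.
have hWv : dotp w v = A + al.
  rewrite /w !(dotpDl, dotpZl) hv -/A; ring.
have Wpos : 0 < dotp w w.
  by rewrite hW; have := sqr_ge0 al; rewrite expr2; nra.
set s := (vnorm w)^-1.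
have hs : s ^+ 2 * dotp w w = 1.
  rewrite /s /vnorm exprVn (sqr_sqrtr (ltW Wpos)) mulVf //; lra.
rewrite !(dotpZl, dotpZr) hWv.
have hA := dot_bound hu hv; rewrite -/A in hA.
have hA2 : 0 <= 1 - A ^+ 2 by nra.
split; first by rewrite mulrA -expr2.
rewrite hW in hs.
have s0 : 0 <= s ^+ 2 by apply: sqr_ge0.
have e : 1 - (s * (A + al)) ^+ 2 = s ^+ 2 * (1 - A ^+ 2).
  have -> : 1 - (s * (A + al)) ^+ 2 = s ^+ 2 * (1 + 2 * al * A + al ^+ 2) - s ^+ 2 * (A + al) ^+ 2 by rewrite hs; ring.
  ring.
rewrite e.
have k : s ^+ 2 * (1 + c ^+ 2) <= 1 by rewrite -hs; apply: ler_wpM2l => //; lra.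
have := ler_wpM2r hA2 k; rewrite mul1r => k'.
apply: le_trans k'; rewrite [X in X <= _]mulrC mulrA [X in _ <= X * _]mulrC.
by rewrite mulrC.
Qed.

Lemma abs_sq (R : realType) (x y : R) : 0 <= x -> x <= `|y| -> x ^+ 2 <= y ^+ 2.
Proof. move=> h0 h; case: (lerP 0 y) => hy; [rewrite ger0_norm in h | rewrite ltr0_norm in h]; nra. Qed.

Lemma sq_abs (R : realType) (x y : R) : 0 <= x -> x ^+ 2 <= y ^+ 2 -> x <= `|y|.
Proof. move=> h0 h; case: (lerP 0 y) => hy; [rewrite ger0_norm | rewrite ltr0_norm]; nra. Qed.

Lemma iter_inv (R : realType) (d : nat) (f : R -> R) (c t : R) (u v : 'rV[R]_d) :
  0 < t -> 0 < c ->
  (forall A, t <= `|A| -> `|A| <= 1 -> c <= `|f A| /\ 0 <= f A * A) ->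
  dotp v v = 1 -> dotp u u = 1 -> t <= `|dotp u v| ->
  forall m, dotp (iter m (step f v) u) (iter m (step f v) u) = 1 /\
    t <= `|dotp (iter m (step f v) u) v| /\
    (1 - dotp (iter m (step f v) u) v ^+ 2) * (1 + m%:R * c ^+ 2) <= 1.
Proof.
move=> t0 c0 P hv hu ht; elim=> [|m [IH1 [IH2 IH3]]] /=.
  split=> //; split=> //; rewrite mul0r addr0 mulr1.
  have := sqr_ge0 (dotp u v); lra.
set x := iter m (step f v) u in IH1 IH2 IH3 *.
set A := dotp x v in IH2 IH3.
have hA := dot_bound IH1 hv; rewrite -/A in hA.
have hA1 : `|A| <= 1 by rewrite ler_norml; lra.
have [P1 P2] := P A IH2 hA1.
have hc : c ^+ 2 <= f A ^+ 2.
  rewrite -[f A ^+ 2]real_normK ?num_real //.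
  by apply: abs_sq; [lra | rewrite normr_id].
have [S1 S2] := step_lemma IH1 hv hc P2.
rewrite -/A in S2.
set A' := dotp (step f v x) v in S2 *.
have hA' := dot_bound S1 hv; rewrite -/A' in hA'.
have X0 : 0 <= 1 - A' ^+ 2 by nra.
have c2 : 0 <= c ^+ 2 by apply: sqr_ge0.
have XX : 1 - A' ^+ 2 <= 1 - A ^+ 2 by nra.
split=> //; split.
  apply: sq_abs; first lra.
  have := abs_sq (ltW t0) IH2; lra.
have m0 : 0 <= m%:R :> R by [].
set X := 1 - A ^+ 2 in IH3 XX S2 *.
set X' := 1 - A' ^+ 2 in X0 XX S2 *.
set M := m%:R * c ^+ 2 in IH3 *.
have M0 : 0 <= M by apply: mulr_ge0.
have -> : m.+1%:R * c ^+ 2 = M + c ^+ 2 by rewrite /M -natr1 mulrDl mul1r.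
have : X' * (1 + (M + c ^+ 2)) <= X' * (1 + c ^+ 2) * (1 + M).
  rewrite -mulrA; apply: ler_wpM2l => //; nra.
have : X' * (1 + c ^+ 2) * (1 + M) <= X * (1 + M).
  by apply: ler_wpM2r => //; lra.
lra.
Qed.

Section Run.
Variables (R : realType) (n d : nat) (f : R -> R).

Lemma run_nseq (U : config R n d) (k c : 'I_n) N : k != c ->
  run f U (nseq N (k, c)) =
  fun x => if x == k then iter N (step f (U c)) (U k) else U x.
Proof.
move=> kc; elim: N U => [|N IH] U /=.
  by apply: funext => x; case: eqP => // ->.
rewrite /run /= -/(run f _ _) IH.
apply: funext => x /=.
have ck : (c == k) = false by apply/negbTE; rewrite eq_sym.
rewrite /intervene /= eqxx ck -iterS iterSr.
by case: (x == k).
Qed.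

Lemma run_cat (U : config R n d) s1 s2 : run f U (s1 ++ s2) = run f (run f U s1) s2.
Proof. exact: foldl_cat. Qed.

Lemma run_list (ctr : 'I_n -> 'I_n) N (ls : seq 'I_n) :
  (forall y, ctr (ctr y) = ctr y) -> uniq ls -> all (fun y => ctr y != y) ls ->
  forall (U : config R n d) x,
  run f U (flatten [seq nseq N (y, ctr y) | y <- ls]) x =
    if x \in ls then iter N (step f (U (ctr x))) (U x) else U x.
Proof.
move=> cc; elim: ls => [|a ls IH] //= /andP[al ul] /andP[ca cl] U x.
rewrite run_cat IH // run_nseq 1?eq_sym // in_cons.
have cna : forall y, ctr y != a.
  move=> y; apply/eqP => h; move: ca; rewrite -h cc; by rewrite eqxx.
rewrite eq_sym (negbTE (cna x)).
case: (eqVneq x a) => [->|xa] /=; first by rewrite (negbTE al).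
by case: ifP.
Qed.

End Run.

Lemma dotp_expand (R : realType) (d : nat) (a b : 'rV[R]_d) (s : R) :
  dotp (a - s *: b) (a - s *: b) = dotp a a - 2 * s * dotp a b + s ^+ 2 * dotp b b.
Proof.
rewrite !(dotpDl, dotpDr, dotpNl, dotpNr, dotpZl, dotpZr) (dotpC b a); ring.
Qed.

Lemma member_close (R : realType) (d : nat) (f : R -> R) (c t eta : R) N (u v : 'rV[R]_d) :
  0 < t -> 0 < c ->
  (forall A, t <= `|A| -> `|A| <= 1 -> c <= `|f A| /\ 0 <= f A * A) ->
  dotp v v = 1 -> dotp u u = 1 -> t <= `|dotp u v| -> 0 < eta ->
  1 <= N%:R * (eta ^+ 2 / 2 * c ^+ 2) ->
  dotp (iter N (step f v) u) (iter N (step f v) u) = 1 /\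
  exists s : R, (s = 1 \/ s = -1) /\
    dotp (iter N (step f v) u - s *: v) (iter N (step f v) u - s *: v) <= eta ^+ 2.
Proof.
move=> t0 c0 P hv hu ht e0 hN.
have [I1 [I2 I3]] := iter_inv t0 c0 P hv hu ht N.
set x := iter N (step f v) u in I1 I2 I3 *.
split=> //.
set A := dotp x v in I2 I3.
have hA := dot_bound I1 hv; rewrite -/A in hA.
set del := eta ^+ 2 / 2 in hN.
have del0 : 0 < del by rewrite /del; apply: divr_gt0 => //; apply: exprn_gt0.
have edel : eta ^+ 2 = 2 * del by rewrite /del; field.
set Y := N%:R * c ^+ 2 in I3.
have Y0 : 0 <= Y by apply: mulr_ge0 => //; apply: sqr_ge0.
have hY : 1 <= Y * del by rewrite /Y -mulrA (mulrC (c ^+ 2)); exact: hN.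
set X := 1 - A ^+ 2 in I3.
have X0 : 0 <= X by rewrite /X; nra.
have k1 : X <= X * (Y * del) by rewrite -{1}(mulr1 X); apply: ler_wpM2l.
have k2 : X * (Y * del) <= del by nra.
have Xd : X <= del by lra.
rewrite edel.
case: (lerP 0 A) => hA0.
  exists 1; split; first by left.
  rewrite dotp_expand I1 hv -/A; rewrite /X in Xd; nra.
exists (-1); split; first by right.
rewrite dotp_expand I1 hv -/A; rewrite /X in Xd; nra.
Qed.

Lemma real_pair (R : realType) (al be G si sj eta : R) :
  `|al| <= eta -> `|be| <= eta -> (si = 1 \/ si = -1) -> (sj = 1 \/ sj = -1) ->
  `|al + si * (be + sj * G)| <= `|G| + 2 * eta /\
  `|G| - 2 * eta <= `|al + si * (be + sj * G)|.
Proof.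
move=> ha hb hi hj.
have /andP[a1 a2] : - eta <= al <= eta by rewrite -ler_norml.
have /andP[b1 b2] : - eta <= be <= eta by rewrite -ler_norml.
case: hi => ->; case: hj => ->; (case: (lerP 0 G) => hG;
  [rewrite (ger0_norm hG) | rewrite (ltr0_norm hG)]);
  (split; [rewrite ler_norml; apply/andP; split; lra
          | rewrite ler_normr; apply/orP; (by left; lra) || (by right; lra)]).
Qed.

Lemma pair_bound (R : realType) (d : nat) (a b p q : 'rV[R]_d) (si sj eta : R) :
  dotp b b = 1 -> dotp p p = 1 -> 0 < eta ->
  (si = 1 \/ si = -1) -> (sj = 1 \/ sj = -1) ->
  dotp (a - si *: p) (a - si *: p) <= eta ^+ 2 ->
  dotp (b - sj *: q) (b - sj *: q) <= eta ^+ 2 ->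
  `|dotp a b| <= `|dotp p q| + 2 * eta /\ `|dotp p q| - 2 * eta <= `|dotp a b|.
Proof.
move=> hb hp e0 hi hj ha hb'.
set ea := a - si *: p in ha; set eb := b - sj *: q in hb'.
have -> : a = ea + si *: p by rewrite /ea subrK.
have Eb : b = eb + sj *: q by rewrite /eb subrK.
rewrite dotpDl dotpZl.
have -> : dotp p b = dotp p eb + sj * dotp p q by rewrite {1}Eb dotpDr dotpZr.
apply: real_pair => //.
  exact: small_dot.
by rewrite dotpC; apply: small_dot.
Qed.

End Helpers.

Lemma size_fl (n : nat) (ctr : 'I_n -> 'I_n) N (l : seq 'I_n) :
  size (flatten [seq nseq N (y, ctr y) | y <- l]) = (size l * N)%N.
Proof. by elim: l => //= a l IH; rewrite size_cat size_nseq IH mulSn. Qed.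

Theorem mainTheorem9 (R : realType) (d n : nat) (eps : R) (f : R -> R) :
  (2 <= d)%N -> (2 <= n)%N -> 0 < eps -> eps < 4^-1 -> stable f ->
  exists K : nat, (0 < K)%N /\
    forall U : config R n d, unit_config U -> eps_active eps U ->
      exists s : seq ('I_n * 'I_n),
        [/\ valid_interventions s, (size s <= K)%N & eps_inactive eps (run f U s)].
Proof.
move=> d2 n2 e0 e4 fs.
pose t := eps / 2.
have t0 : 0 < t by rewrite /t; lra.
have t1 : t <= 1 by rewrite /t; lra.
have [c c0 P] := f_lower fs t0 t1.
pose eta := eps / 4.
have eta0 : 0 < eta by rewrite /eta; lra.
pose del := eta ^+ 2 / 2 * c ^+ 2.
have del0 : 0 < del.
  by rewrite /del; apply: mulr_gt0; [apply: divr_gt0 => //; apply: exprn_gt0 | apply: exprn_gt0].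
pose N := (Num.trunc (del^-1)).+1.
have hN : 1 <= N%:R * del.
  have := truncnS_gt (del^-1); rewrite -/N => h.
  have h' : del^-1 * del < N%:R * del by rewrite ltr_pM2r.
  rewrite mulVf ?gt_eqF // in h'; exact: ltW.
have N0 : (0 < N)%N by [].
clearbody N.
exists (n * N)%N; split; first by rewrite muln_gt0 N0 andbT; apply: leq_trans n2.
move=> U hU _.
have Uu : forall i, dotp (U i) (U i) = 1.
  by move=> i; have := hU i; rewrite unit_dotE.
pose Pc (C : {set 'I_n}) := [forall a in C, forall b in C, (a != b) ==> (`|gram U a b| <= t)].
have P0 : Pc finset.set0 by apply/forallP => a; apply/implyP; rewrite finset.in_set0.
case: (@arg_maxnP _ _ Pc (fun C : {set 'I_n} => #|C|) P0) => C PC Cmax.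
have PCab : forall a b, a \in C -> b \in C -> a != b -> `|gram U a b| <= t.
  move=> a b aC bC ab; move/forallP: PC => /(_ a); rewrite aC /= => /forallP /(_ b).
  by rewrite bC ab.
pose pk x := [pick y | (y \in C) && (t < `|gram U x y|)].
have pkS : forall x, x \notin C -> exists2 y, pk x = Some y & (y \in C) && (t < `|gram U x y|).
  move=> x xC; rewrite /pk; case: pickP => [y hy|hn]; first by exists y.
  exfalso.
  have : Pc (x |: C).
    apply/forallP => a; apply/implyP => aC; apply/forallP => b; apply/implyP => bC.
    apply/implyP => ab.
    move: aC bC; rewrite !in_setU1.
    case: (eqVneq a x) => [ax|ax] /=; case: (eqVneq b x) => [bx|bx] /= aC bC.
    - by move: ab; rewrite ax bx eqxx.
    - rewrite ax; have := hn b; rewrite bC /= => /negbT; rewrite -leNgt; exact.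
    - rewrite bx; have := hn a; rewrite aC /= => /negbT; rewrite -leNgt.
      by rewrite /gram dotpC.
    - exact: PCab.
  by move=> /Cmax; rewrite cardsU1 xC add1n /= ltnn.
pose ctr x := if x \in C then x else odflt x (pk x).
have cC : forall x, ctr x \in C.
  move=> x; rewrite /ctr; case: ifP => // /negbT xC.
  by have [y -> /andP[]] := pkS x xC.
have cc : forall y, ctr (ctr y) = ctr y by move=> y; rewrite {1}/ctr cC.
have cne : forall x, x \notin C -> ctr x != x.
  by move=> x xC; apply/eqP => h; move: (cC x); rewrite h (negbTE xC).
have ct : forall x, x \notin C -> t < `|gram U x (ctr x)|.
  move=> x xC; rewrite /ctr (negbTE xC).
  by have [y -> /andP[]] := pkS x xC.
have cid : forall x, x \in C -> ctr x = x by move=> x xC; rewrite /ctr xC.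
pose ms := [seq x <- enum 'I_n | x \notin C].
have msE : forall x, (x \in ms) = (x \notin C) by move=> x; rewrite mem_filter mem_enum andbT.
exists (flatten [seq nseq N (y, ctr y) | y <- ms]); split.
- apply/allP => ij /flattenP [l /mapP[y ym ->]]; rewrite mem_nseq => /andP[_ /eqP ->] /=.
  by rewrite eq_sym; apply: cne; rewrite -msE.
- rewrite size_fl leq_mul2r; apply/orP; right.
  by rewrite size_filter; apply: leq_trans (count_size _ _) _; rewrite size_enum_ord.
set W := run f U _.
have HW : forall x, W x = if x \in ms then iter N (step f (U (ctr x))) (U x) else U x.
  move=> x; apply: run_list => //.
    by apply: filter_uniq; apply: enum_uniq.
  by apply/allP => y; rewrite msE; apply: cne.
have key : forall x, dotp (W x) (W x) = 1 /\ exists s : R, (s = 1 \/ s = -1) /\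
    dotp (W x - s *: U (ctr x)) (W x - s *: U (ctr x)) <= eta ^+ 2.
  move=> x; rewrite HW msE; case: (boolP (x \in C)) => xC /=.
    split; first exact: Uu.
    exists 1; split; first by left.
    rewrite cid // dotp_expand Uu.
    have := sqr_ge0 eta; lra.
  apply: (@member_close R d f c t eta N) => //.
    by apply: ltW; apply: ct.
move=> [i [j /andP[h1 h2]]].
rewrite /gram in h1 h2.
have [Ui [si [hsi Ei]]] := key i.
have [Uj [sj [hsj Ej]]] := key j.
have [B1 B2] := pair_bound Uj (Uu (ctr i)) eta0 hsi hsj Ei Ej.
case: (eqVneq (ctr i) (ctr j)) => hc.
  rewrite hc Uu normr1 in B2.
  rewrite /eta in B2; lra.
have := PCab _ _ (cC i) (cC j) hc; rewrite /gram => hG.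
rewrite /eta in B1; rewrite /t in hG; lra.
Qed.
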